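(* Let $\Lambda$ be a normal modal logic over the modal language $\mathcal{L}$ which is (logically) compact and which is sound and complete with respect to a class $\mathcal{C}$ of pointed Kripke models. Then the modal space $\mathcal{C}_{\boldsymbol{\mathcal{L}}_{\Lambda}}$ (the quotient of $\mathcal{C}$ under $\Lambda$-equivalence, made into a set via Scott's trick), equipped with the Stone topology $\mathcal{T}_{\boldsymbol{\mathcal{L}}_{\Lambda}}$, is a Stone space, i.e. it is totally disconnected, compact and Hausdorff.
   Context: Fix a countable non-empty set $\Phi$ of atoms and a countable non-empty set $\mathcal{I}$ of operator indices. The modal language $\mathcal{L}$ is given by $\varphi ::= \top \mid p \mid \neg\varphi \mid \varphi\wedge\varphi \mid \Box_i\varphi$ ($p\in\Phi$, $i\in\mathcal{I}$). A Kripke model is $M=(\llbracket M\rrbracket,R,\llbracket\cdot\rrbracket)$ with $\llbracket M\rrbracket$ a countable non-empty set of states, $R_i\subseteq \llbracket M\rrbracket^2$ for each $i\in\mathcal{I}$, and $\llbracket\cdot\rrbracket:\Phi\to\mathcal{P}(\llbracket M\rrbracket)$; a pointed Kripke model is $Ms$ with $s\in\llbracket M\rrbracket$, and formulas are evaluated with the standard semantics. For a normal modal logic $\Lambda$ and $\varphi\in\mathcal{L}$, $\boldsymbol{\varphi}$ is the set of formulas $\Lambda$-provably equivalent to $\varphi$, and $\boldsymbol{\mathcal{L}}_{\Lambda}=\{\boldsymbol{\varphi}:\varphi\in\mathcal{L}\}$. $\Lambda$ is compact if a set $A\subseteq\mathcal{L}$ is $\Lambda$-consistent iff every finite subset of $A$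 is. For a collection $X$ of pointed Kripke models on which $\Lambda$ is sound, $X_{\boldsymbol{\mathcal{L}}_{\Lambda}}=\{\boldsymbol{x}:x\in X\}$ where $\boldsymbol{x}=\{y\in X:\ y\models\varphi \text{ iff } x\models\varphi \text{ for all }\varphi\in\mathcal{L}\}$. The Stone topology $\mathcal{T}_{\boldsymbol{\mathcal{L}}_{\Lambda}}$ on it is generated by the sets $\{\boldsymbol{x}: x\models\varphi\}$, $\varphi\in\mathcal{L}$. *)

(* Defs.v *)
From HB Require Import structures.
From mathcomp Require Import all_boot all_order.
From mathcomp Require Import boolp classical_sets functions cardinality.
From mathcomp Require Import topology.
From Stdlib Require List.
Export boolp classical_sets cardinality topology.

Set Implicit Arguments.
Unset Strict Implicit.
Unset Printing Implicit Defensive.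

Local Open Scope classical_set_scope.

Inductive form (Phi I : Type) : Type :=
  | Top : form Phi I
  | Atom : Phi -> form Phi I
  | Neg : form Phi I -> form Phi I
  | And : form Phi I -> form Phi I -> form Phi I
  | Box : I -> form Phi I -> form Phi I.
Arguments Top {Phi I}.

Section Syntax.
Context {Phi I : Type}.
Local Notation form := (form Phi I).

Definition Imp (a b : form) : form := Neg (And a (Neg b)).
Definition Iff (a b : form) : form := And (Imp a b) (Imp b a).
Definition bigAnd (s : seq form) : form := foldr (@And Phi I) Top s.

Fixpoint subst (sg : Phi -> form) (a : form) : form :=
  match a with
  | Top => Top
  | Atom p => sg p
  | Neg b => Neg (subst sg b)
  | And b c => And (subst sg b) (subst sg c)
  | Box i b => Box i (subst sg b)
  end.

(** propositional tautologies: true under every Boolean valuation that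
    treats atoms and boxed formulas as propositional variables *)
Fixpoint peval (v : Phi -> bool) (w : I -> form -> bool) (a : form) : bool :=
  match a with
  | Top => true
  | Atom p => v p
  | Neg b => ~~ peval v w b
  | And b c => peval v w b && peval v w c
  | Box i b => w i b
  end.
Definition tautology (a : form) : Prop := forall v w, peval v w a.

Definition normal_logic (L : set form) : Prop :=
  [/\ (forall a, tautology a -> L a),
      (forall i a b, L (Imp (Box i (Imp a b)) (Imp (Box i a) (Box i b)))),
      (forall a b, L (Imp a b) -> L a -> L b),
      (forall i a, L a -> L (Box i a)) &
      (forall sg a, L a -> L (subst sg a))].

Definition consistent (L : set form) (A : set form) : Prop :=
  ~ exists s : seq form, (forall a, List.In a s -> A a) /\ L (Neg (bigAnd s)).

Definition compact_logic (L : set form) : Prop :=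
  forall A : set form, consistent L A <->
    (forall B : set form, B `<=` A -> finite_set B -> consistent L B).
End Syntax.

Record kmodel (Phi I : Type) := KModel {
  st : Type;
  st_inhabited : inhabited st;
  st_countable : exists f : st -> nat, injective f;
  krel : I -> st -> st -> Prop;
  kval : Phi -> set st }.

Record pmodel (Phi I : Type) := PModel { pm : kmodel Phi I; pt : st pm }.

Fixpoint sat {Phi I : Type} (M : kmodel Phi I) (s : st M) (a : form Phi I)
  : Prop :=
  match a with
  | Top => True
  | Atom p => @kval _ _ M p s
  | Neg b => ~ sat s b
  | And b c => sat s b /\ sat s c
  | Box i b => forall t, @krel _ _ M i s t -> sat t b
  end.

Definition psat {Phi I : Type} (x : pmodel Phi I) (a : form Phi I) : Prop :=
  sat (pt x) a.

Definition sound_complete {Phi I : Type} (L : set (form Phi I))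
  (C : set (pmodel Phi I)) : Prop :=
  forall A : set (form Phi I),
    consistent L A <-> exists x, C x /\ forall a, A a -> psat x a.

Definition modal_class {Phi I : Type} (C : set (pmodel Phi I))
  (x : pmodel Phi I) : set (pmodel Phi I) :=
  [set y | C y /\ forall a, psat y a <-> psat x a].

Definition modal_space {Phi I : Type} (C : set (pmodel Phi I)) : Type :=
  { S : set (pmodel Phi I) | exists x, C x /\ S = modal_class C x }.

HB.instance Definition _ (Phi I : Type) (C : set (pmodel Phi I)) :=
  gen_eqMixin (modal_space C).
HB.instance Definition _ (Phi I : Type) (C : set (pmodel Phi I)) :=
  gen_choiceMixin (modal_space C).
HB.instance Definition _ (Phi I : Type) :=
  gen_eqMixin (form Phi I).
HB.instance Definition _ (Phi I : Type) :=
  gen_choiceMixin (form Phi I).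
HB.instance Definition _ (Phi I : Type) :=
  isPointed.Build (form Phi I) Top.

Definition stone_basic {Phi I : Type} (C : set (pmodel Phi I))
  (a : form Phi I) : set (modal_space C) :=
  [set q | exists x, C x /\ proj1_sig q = modal_class C x /\ psat x a].

Arguments stone_basic {Phi I} C a.

HB.instance Definition _ (Phi I : Type) (C : set (pmodel Phi I)) :=
  isSubBaseTopological.Build (modal_space C) [set: form Phi I]
    (stone_basic C).

(* Main.v *)
Require Import Defs.
From mathcomp Require Import all_boot.
From mathcomp Require Import boolp classical_sets cardinality topology.
Set Implicit Arguments. Unset Strict Implicit.
Local Open Scope classical_set_scope.

Section S.
Context (Phi I : countType) (C : set (pmodel Phi I)).
Local Notation X := (modal_space C).
Local Notation sb := (stone_basic C).

Lemma open_unfold (U : set X) : open U ->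
  exists2 D', D' `<=` finI_from [set: form Phi I] sb &
     U = \bigcup_(i in D') i.
Proof. by case=> D' sD' <-; exists D'. Qed.

Lemma open_sb a : open (sb a).
Proof.
exists [set sb a]; last by rewrite bigcup_set1.
by move=> _ ->; apply: finI_from1.
Qed.

Lemma classE (q : X) x y : C x -> C y -> proj1_sig q = modal_class C x ->
  proj1_sig q = modal_class C y -> forall a, psat x a <-> psat y a.
Proof.
move=> Cx Cy qx qy.
have : modal_class C x x by split.
by rewrite -qx qy => -[_ H].
Qed.

Lemma sbE (q : X) x a : C x -> proj1_sig q = modal_class C x ->
  sb a q <-> psat x a.
Proof.
move=> Cx qx; split; last by move=> xa; exists x.
by case=> y [Cy [qy ya]]; exact: (proj2 (classE Cx Cy qx qy a) ya).
Qed.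

Lemma rep (q : X) : exists x, C x /\ proj1_sig q = modal_class C x.
Proof. exact: (proj2_sig q). Qed.

Lemma sb_top q : sb Top q.
Proof. by case: (rep q) => x [Cx qx]; exists x. Qed.

Lemma sb_and a b q : sb (And a b) q <-> sb a q /\ sb b q.
Proof.
case: (rep q) => x [Cx qx]; rewrite !(sbE _ Cx qx); done.
Qed.

Lemma sb_neg a q : sb (Neg a) q <-> ~ sb a q.
Proof.
case: (rep q) => x [Cx qx]; rewrite !(sbE _ Cx qx); done.
Qed.

Lemma In_mem (T : eqType) (s : seq T) a : List.In a s <-> a \in s.
Proof.
elim: s => //= b s IH; rewrite in_cons; split.
  by case=> [->|/IH H]; apply/orP; [left|right].
by case/orP=> [/eqP->|/IH H]; [left|right].
Qed.

Lemma sb_bigAnd s q : sb (bigAnd s) q <-> forall a, List.In a s -> sb a q.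
Proof.
elim: s => [|b s IH] /=; first by split=> // _; exact: sb_top.
rewrite sb_and IH; split.
  by case=> Hb Hs a [<-|/Hs].
by move=> H; split; [apply: H; left | move=> a Ha; apply: H; right].
Qed.

Lemma nbhs_sb (p : X) B : nbhs p B -> exists a, sb a p /\ sb a `<=` B.
Proof.
rewrite nbhsE => -[U [oU Up] UB].
case: (open_unfold oU) => D' sD' UE; rewrite UE in Up.
case: Up => V D'V Vp; case: (sD' V D'V) => F _ FV.
exists (bigAnd (finmap.enum_fset F)); split.
  by apply/sb_bigAnd => a /In_mem aF; rewrite -FV in Vp; exact: Vp.
move=> q /sb_bigAnd Hq; apply: UB; rewrite UE; exists V => //.
by rewrite -FV => a aF; apply: Hq; apply/In_mem.
Qed.

Lemma sep (p q : X) : p <> q -> exists a, sb a p /\ ~ sb a q.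
Proof.
move=> pq; apply: contrapT => Hn; apply: pq.
case: (rep p) => x [Cx px]; case: (rep q) => y [Cy qy].
have H : forall a, psat x a -> psat y a.
  move=> a xa; apply: contrapT => ya; apply: Hn; exists a.
  by rewrite (sbE _ Cx px) (sbE _ Cy qy).
have E : modal_class C x = modal_class C y.
  rewrite predeqE => z; split=> -[Cz Hz]; split=> // a; rewrite Hz; split.
  - exact: H.
  - move=> ya; apply: contrapT => xa; exact: (H (Neg a) xa ya).
  - move=> xa; apply: contrapT => ya; exact: (H (Neg a) ya xa).
  - exact: H.
clear Hn H; move: px qy; case: p => P hp; case: q => Q hq /= PE QE.
move: hp hq; rewrite PE QE E => hp hq; congr exist; exact: Prop_irrelevance.
Qed.

End S.

Theorem corollary23 (Phi I : countType) (nePhi : inhabited Phi)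
  (neI : inhabited I) (L : set (form Phi I)) (C : set (pmodel Phi I)) :
  normal_logic L -> compact_logic L -> sound_complete L C ->
  [/\ totally_disconnected [set: modal_space C],
      compact [set: modal_space C] &
      hausdorff_space (modal_space C)].
Proof.
move=> _ _ SC.
have clo : forall a, clopen (stone_basic C a).
  move=> a; split; first exact: open_sb.
  have -> : stone_basic C a = ~` stone_basic C (Neg a).
    by rewrite predeqE => q; rewrite /= sb_neg; split=> [H /(_ H)|/contrapT].
  by rewrite closedC; exact: open_sb.
split.
- apply: zero_dimension_totally_disconnected => p q /eqP pq.
  case: (sep pq) => a [pa qa]; exists (stone_basic C a); split=> //.
- move=> F FF _.
  pose G := [set a | F (stone_basic C a)].
  have cG : consistent L G.
    move=> [s [sG Ls]].
    have Fs : F (stone_basic C (bigAnd s)).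
      elim: s sG {Ls} => [|b s IH] sG /=.
        by apply: filterS filterT => q _; exact: sb_top.
      have : F (stone_basic C b `&` stone_basic C (bigAnd s)).
        by apply: filterI; [apply: sG; left | apply: IH => a Ha; apply: sG; right].
      by apply: filterS => q [Hb Hs]; apply/sb_and.
    case: (filter_ex Fs) => q /sb_bigAnd qs.
    case: (rep q) => x [Cx qx].
    have : consistent L [set a | List.In a s].
      apply/SC; exists x; split=> // a /qs.
      by rewrite (sbE _ Cx qx).
    by apply; exists s.
  case/SC: cG => x [Cx Gx].
  have hx : exists y, C y /\ modal_class C x = modal_class C y by exists x.
  pose p0 : modal_space C := exist _ (modal_class C x) hx.
  have qx : sval p0 = modal_class C x by [].
  exists p0; split=> //.
  move=> A B FA /nbhs_sb [a [pa aB]].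
  apply: contrapT => nAB.
  have : G (Neg a).
    apply: filterS FA => q Aq; apply/sb_neg => qa.
    by apply: nAB; exists q; split=> //; apply: aB.
  move/Gx => /=; apply.
  by move: pa; rewrite (sbE _ Cx qx).
- move=> p q pq; apply: contrapT => /sep [a [pa qa]].
  have := pq (stone_basic C a) (stone_basic C (Neg a)).
  case.
  + by apply: open_nbhs_nbhs; split=> //; exact: open_sb.
  + by apply: open_nbhs_nbhs; split; [exact: open_sb | exact/sb_neg].
  by move=> z [za /sb_neg].
Qed.
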